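(* Let $\mathcal K$ be a 2-category which admits Eilenberg–Moore constructions for monads and in which idempotent 2-cells split, with $J^w$ as in the context. Let $(V,\psi),(W,\phi):(t,\mu,\eta)\to(t',\mu',\eta')$ be 1-cells of $\mathrm{EM}^w(\mathcal K)$ and $\omega:V\Rightarrow W$ a 2-cell of $\mathcal K$; let $(\iota,\pi)$ denote the chosen splittings used to construct $J^w(V,\psi)$ and $J^w(W,\phi)$, so that $(J^w(V,\psi),\iota,\pi)$ and $(J^w(W,\phi),\iota,\pi)$ are weak liftings of $V$ and $W$ for $t,t'$. (1) The following are equivalent: (i) $\omega t\ast\psi=W\mu\ast\phi t\ast t'\omega t\ast t'\psi\ast t'\eta'V$; (ii) $\omega t\ast\psi\ast\eta'V$ is a 2-cell $(V,\psi)\Rightarrow(W,\phi)$ in $\mathrm{EM}^w(\mathcal K)$; (iii) $\pi\ast\omega v\ast\iota$ is a morphism of $t'$-algebras $(v'J^w(V,\psi),v'\epsilon'J^w(V,\psi))\to(v'J^w(W,\phi),v'\epsilon'J^w(W,\phi))$ (i.e. a 2-cell between these 1-cells $IJ(t)\to t'$ of $\mathrm{EM}(\mathcal K)$) and $\iota\ast\pi\ast\omega v\ast\iota=\omega v\ast\iota$; (iv) $\omega$ has a weak $\iota$-lifting $J^w(V,\psi)\Rightarrow J^w(W,\phi)$. If these hold, then $v'J^w(\omega t\ast\psi\ast\eta'V)=\pi\ast\omega v\ast\iota$, i.e. the weak $\iota$-lifting of $\omega$ is $J^w(\omega t\ast\psi\ast\eta'V)$. (2) The following are equivalent: (i) $\phi\ast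 t'\omega=W\mu\ast\phi t\ast\eta'Wt\ast\omega t\ast\psi$; (ii) $\phi\ast\eta'W\ast\omega$ is a 2-cell $(V,\psi)\Rightarrow(W,\phi)$ in $\mathrm{EM}^w(\mathcal K)$; (iii) $\pi\ast\omega v\ast\iota$ is a morphism of $t'$-algebras as in (1)(iii) and $\pi\ast\omega v\ast\iota\ast\pi=\pi\ast\omega v$; (iv) $\omega$ has a weak $\pi$-lifting $J^w(V,\psi)\Rightarrow J^w(W,\phi)$. If these hold, then $v'J^w(\phi\ast\eta'W\ast\omega)=\pi\ast\omega v\ast\iota$, i.e. the weak $\pi$-lifting of $\omega$ is $J^w(\phi\ast\eta'W\ast\omega)$. (3) The following are equivalent: (i) $\phi\ast t'\omega=\omega t\ast\psi$; (ii) $\phi\ast\eta'W\ast\omega$ and $\omega t\ast\psi\ast\eta'V$ are both 2-cells $(V,\psi)\Rightarrow(W,\phi)$ in $\mathrm{EM}^w(\mathcal K)$ (and then they are equal); (iii) $\pi\ast\omega v\ast\iota$ is a morphism of $t'$-algebras as in (1)(iii) and $\iota\ast\pi\ast\omega v=\omega v\ast\iota\ast\pi$; (iv) $\omega$ has both a weak $\iota$-lifting and a weak $\pi$-lifting $J^w(V,\psi)\Rightarrow J^w(W,\phi)$ (and then they are equal).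
   Context: Conventions in a 2-category $\mathcal K$: horizontal composition and whiskering by juxtaposition in the order of functor composition; identity 1-cell of $k$ written $k$, identity 2-cell of $V$ written $V$; vertical composition $\ast$ with $\alpha\ast\beta$ meaning $\beta$ then $\alpha$. Monads $(t,\mu,\eta)$ on $k$ are associative and unital. $\mathrm{EM}^w(\mathcal K)$: 1-cells $(V,\psi):(t,\mu,\eta)\to(t',\mu',\eta')$ with $V:k\to k'$, $\psi:t'V\Rightarrow Vt$, $V\mu\ast\psi t\ast t'\psi=\psi\ast\mu'V$; 2-cells $(V,\psi)\Rightarrow(W,\phi)$ are $\varrho:V\Rightarrow Wt$ with $W\mu\ast\varrho t\ast\psi=W\mu\ast\phi t\ast t'\varrho$ and $\varrho=W\mu\ast\phi t\ast\eta'Wt\ast\varrho$; vertical composite $\tau\bullet\varrho=U\mu\ast\tau t\ast\varrho$, identity 2-cell on $(W,\phi)$ is $\phi\ast\eta'W$ (these form a 2-category, with the Lack–Street $\mathrm{EM}(\mathcal K)$ as sub-2-category of 1-cells with $\psi\ast\eta'V=V\eta$). $\mathcal K$ admits Eilenberg–Moore constructions for monads: the inclusion $I:\mathcal K\to\mathrm{EM}(\mathcal K)$ has a right 2-adjoint $J$; each monad $(t,\mu,\eta)$ gives an adjunction $f\dashv v$, $f:k\to J(t)$, $v:J(t)\to k$, unit $\eta$, counit $\epsilon:fv\Rightarrow J(t)$, $t=vf$, $\mu=v\epsilon f$ (for $t'$: $f',v',\eta',\epsilon'$); $X\mapsto(vX,v\epsilon X)$, $\omega\mapsto v\omega$ is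 an isomorphism from $\mathcal K(l,J(t))$ to the category of $t$-algebras $(A:l\to k,\alpha:tA\Rightarrow A)$ with morphisms $\rho$ satisfying $\beta\ast t\rho=\rho\ast\alpha$. Idempotent 2-cells split. $J^w$: for each 1-cell $(V,\psi)$ of $\mathrm{EM}^w(\mathcal K)$ a splitting $Vv\overset{\pi}{\Rightarrow}\widetilde V\overset{\iota}{\Rightarrow}Vv$ of the idempotent $Vv\epsilon\ast\psi v\ast\eta'Vv$ is fixed; $J^w(t)=J(t)$; $J^w(V,\psi):J(t)\to J(t')$ is the unique 1-cell with $v'J^w(V,\psi)=\widetilde V$ and $v'\epsilon'J^w(V,\psi)=\pi\ast Vv\epsilon\ast\psi v\ast t'\iota$; for a 2-cell $\varrho:(V,\psi)\Rightarrow(W,\phi)$, $J^w(\varrho)$ is the unique 2-cell with $v'J^w(\varrho)=\pi\ast Wv\epsilon\ast\varrho v\ast\iota$. Weak liftings: a weak lifting of a 1-cell $V:k\to k'$ for monads $t$ (on $k$) and $t'$ (on $k'$) is a 1-cell $\overline V:J(t)\to J(t')$ together with a 2-cell $\iota:v'\overline V\Rightarrow Vv$ and a retraction $\pi:Vv\Rightarrow v'\overline V$ ($\pi\ast\iota$ identity). Given weak liftings $(\overline V,\iota,\pi)$ of $V$ and $(\overline W,\iota,\pi)$ of $W$, a weak $\iota$-lifting of $\omega:V\Rightarrow W$ is a 2-cell $\omega^\iota:\overline V\Rightarrow\overline W$ with $\iota\ast v'\omega^\iota=\omega v\ast\iota$; a weak $\pi$-lifting is $\omega^\pi:\overline V\Rightarrow\overline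 W$ with $v'\omega^\pi\ast\pi=\pi\ast\omega v$. *)

(* Defs.v *)
(* comp1 G F is the composite "G F" (functor order: first F, then G).  *)
(* vcomp α β = α ∗ β means "β then α".                                  *)
Record TwoCatData := {
  Ob :> Type;
  Hom : Ob -> Ob -> Type;
  Cell : forall a b : Ob, Hom a b -> Hom a b -> Type;
  id1 : forall a : Ob, Hom a a;
  comp1 : forall a b c : Ob, Hom b c -> Hom a b -> Hom a c;
  id2 : forall (a b : Ob) (F : Hom a b), Cell a b F F;
  vcomp : forall (a b : Ob) (F G H : Hom a b),
      Cell a b G H -> Cell a b F G -> Cell a b F H;
  whl : forall (a b c : Ob) (G : Hom b c) (F F' : Hom a b),
      Cell a b F F' -> Cell a c (comp1 a b c G F) (comp1 a b c G F');
  whr : forall (a b c : Ob) (G G' : Hom b c) (F : Hom a b),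
      Cell b c G G' -> Cell a c (comp1 a b c G F) (comp1 a b c G' F)
}.

Set Implicit Arguments.
Unset Strict Implicit.

Arguments Hom {K} a b : rename.
Arguments Cell {K a b} F G : rename.
Arguments id1 {K} a : rename.
Arguments comp1 {K a b c} G F : rename.
Arguments id2 {K a b} F : rename.
Arguments vcomp {K a b F G H} α β : rename.
Arguments whl {K a b c} G {F F'} α : rename.
Arguments whr {K a b c G G'} F α : rename.

Notation "G ⊙ F" := (comp1 G F) (at level 25, left associativity).
Notation "α ∗ β" := (vcomp α β) (at level 41, right associativity).
Notation "G ◁ α" := (whl G α) (at level 31, right associativity).
Notation "α ▷ F" := (whr F α) (at level 28, left associativity).

Definition eqcell {K : TwoCatData} {a b : K} {F G : Hom a b} (e : F = G)
  : Cell F G :=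
  match e in _ = G' return Cell F G' with eq_refl => id2 F end.

Record TwoCatLaws1 (K : TwoCatData) : Prop := {
  l_assoc : forall (a b c d : K) (h : Hom c d) (g : Hom b c) (f : Hom a b),
      h ⊙ (g ⊙ f) = (h ⊙ g) ⊙ f;
  l_idl : forall (a b : K) (f : Hom a b), id1 b ⊙ f = f;
  l_idr : forall (a b : K) (f : Hom a b), f ⊙ id1 a = f
}.

Arguments l_assoc {K} L {a b c d} h g f : rename.
Arguments l_idl {K} L {a b} f : rename.
Arguments l_idr {K} L {a b} f : rename.

Record TwoCatLaws2 (K : TwoCatData) (L : TwoCatLaws1 K) : Prop := {
  l_vassoc : forall (a b : K) (F G H I : Hom a b)
      (α : Cell H I) (β : Cell G H) (γ : Cell F G),
      α ∗ (β ∗ γ) = (α ∗ β) ∗ γ;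
  l_vidl : forall (a b : K) (F G : Hom a b) (α : Cell F G), id2 G ∗ α = α;
  l_vidr : forall (a b : K) (F G : Hom a b) (α : Cell F G), α ∗ id2 F = α;
  l_whl_vcomp : forall (a b c : K) (G : Hom b c) (F1 F2 F3 : Hom a b)
      (α : Cell F2 F3) (β : Cell F1 F2), G ◁ (α ∗ β) = (G ◁ α) ∗ (G ◁ β);
  l_whl_id2 : forall (a b c : K) (G : Hom b c) (F : Hom a b),
      G ◁ id2 F = id2 (G ⊙ F);
  l_whr_vcomp : forall (a b c : K) (G1 G2 G3 : Hom b c) (F : Hom a b)
      (α : Cell G2 G3) (β : Cell G1 G2), (α ∗ β) ▷ F = (α ▷ F) ∗ (β ▷ F);
  l_whr_id2 : forall (a b c : K) (G : Hom b c) (F : Hom a b),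
      id2 G ▷ F = id2 (G ⊙ F);
  l_interchange : forall (a b c : K) (G G' : Hom b c) (F F' : Hom a b)
      (α : Cell G G') (β : Cell F F'),
      (G' ◁ β) ∗ (α ▷ F) = (α ▷ F') ∗ (G ◁ β);
  l_whl_id1 : forall (a b : K) (F F' : Hom a b) (α : Cell F F'),
      eqcell (l_idl L F') ∗ (id1 b ◁ α) = α ∗ eqcell (l_idl L F);
  l_whr_id1 : forall (a b : K) (G G' : Hom a b) (α : Cell G G'),
      eqcell (l_idr L G') ∗ (α ▷ id1 a) = α ∗ eqcell (l_idr L G);
  l_whl_comp : forall (a b c d : K) (H : Hom c d) (G : Hom b c)
      (F F' : Hom a b) (α : Cell F F'),
      eqcell (l_assoc L H G F') ∗ (H ◁ (G ◁ α))
      = ((H ⊙ G) ◁ α) ∗ eqcell (l_assoc L H G F);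
  l_whr_comp : forall (a b c d : K) (H H' : Hom c d) (G : Hom b c)
      (F : Hom a b) (α : Cell H H'),
      eqcell (l_assoc L H' G F) ∗ (α ▷ (G ⊙ F))
      = ((α ▷ G) ▷ F) ∗ eqcell (l_assoc L H G F);
  l_whl_whr : forall (a b c d : K) (H : Hom c d) (G G' : Hom b c)
      (F : Hom a b) (β : Cell G G'),
      eqcell (l_assoc L H G' F) ∗ (H ◁ (β ▷ F))
      = ((H ◁ β) ▷ F) ∗ eqcell (l_assoc L H G F)
}.

Record TwoCat := {
  tc_data :> TwoCatData;
  tc_laws1 : TwoCatLaws1 tc_data;
  tc_laws2 : TwoCatLaws2 tc_laws1
}.

Definition assoc1 {K : TwoCat} {a b c d : K} (h : Hom c d) (g : Hom b c)
  (f : Hom a b) : h ⊙ (g ⊙ f) = (h ⊙ g) ⊙ f := l_assoc (tc_laws1 K) h g f.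
Definition idl1 {K : TwoCat} {a b : K} (f : Hom a b) : id1 b ⊙ f = f :=
  l_idl (tc_laws1 K) f.
Definition idr1 {K : TwoCat} {a b : K} (f : Hom a b) : f ⊙ id1 a = f :=
  l_idr (tc_laws1 K) f.

Definition idem_split (K : TwoCat) : Prop :=
  forall (a b : K) (F : Hom a b) (e : Cell F F), e ∗ e = e ->
  exists (G : Hom a b) (p : Cell F G) (i : Cell G F), i ∗ p = e /\ p ∗ i = id2 G.

Record Monad (K : TwoCat) (k : K) := {
  mt : Hom k k;
  mmu : Cell (mt ⊙ mt) mt;
  meta : Cell (id1 k) mt;
  mon_assoc : mmu ∗ (mt ◁ mmu) = mmu ∗ (mmu ▷ mt) ∗ eqcell (assoc1 mt mt mt);
  mon_unit_l : mmu ∗ (meta ▷ mt) ∗ eqcell (eq_sym (idl1 mt)) = id2 mt;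
  mon_unit_r : mmu ∗ (mt ◁ meta) ∗ eqcell (eq_sym (idr1 mt)) = id2 mt
}.
Arguments mt {K k} M : rename.
Arguments mmu {K k} M : rename.
Arguments meta {K k} M : rename.

Definition etaw {K : TwoCat} {k a : K} (M : Monad k) (X : Hom a k)
  : Cell X (mt M ⊙ X) := (meta M ▷ X) ∗ eqcell (eq_sym (idl1 X)).

Definition is_alg {K : TwoCat} {k l : K} (M : Monad k) (A : Hom l k)
  (α : Cell (mt M ⊙ A) A) : Prop :=
  α ∗ (mt M ◁ α) = α ∗ (mmu M ▷ A) ∗ eqcell (assoc1 (mt M) (mt M) A)
  /\ α ∗ etaw M A = id2 A.
Arguments is_alg {K k l} M {A} α.

Definition is_alg_mor {K : TwoCat} {k l : K} (M : Monad k) {A B : Hom l k}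
  (α : Cell (mt M ⊙ A) A) (β : Cell (mt M ⊙ B) B) (ρ : Cell A B) : Prop :=
  β ∗ (mt M ◁ ρ) = ρ ∗ α.
Arguments is_alg_mor {K k l} M {A B} α β ρ.

Section Eqs.
Context {K : TwoCat}.

Lemma eq_tvX {k J l : K} (v : Hom J k) (f : Hom k J) (t : Hom k k)
  (e : v ⊙ f = t) (X : Hom l J) : t ⊙ (v ⊙ X) = v ⊙ ((f ⊙ v) ⊙ X).
Proof. rewrite <- e, !assoc1. reflexivity. Qed.

Lemma eq_vidX {k J l : K} (v : Hom J k) (X : Hom l J) :
  v ⊙ (id1 J ⊙ X) = v ⊙ X.
Proof. rewrite idl1. reflexivity. Qed.

Lemma eq_Wtv {k k' J : K} (v : Hom J k) (f : Hom k J) (t : Hom k k)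
  (e : v ⊙ f = t) (W : Hom k k') : (W ⊙ t) ⊙ v = W ⊙ (v ⊙ (f ⊙ v)).
Proof. rewrite <- e, !assoc1. reflexivity. Qed.

Lemma eq_Wvid {k k' J : K} (v : Hom J k) (W : Hom k k') :
  W ⊙ (v ⊙ id1 J) = W ⊙ v.
Proof. rewrite idr1. reflexivity. Qed.

Lemma eq_tt {k J : K} (v : Hom J k) (f : Hom k J) (t : Hom k k)
  (e : v ⊙ f = t) : (v ⊙ f) ⊙ (v ⊙ f) = t ⊙ t.
Proof. rewrite e. reflexivity. Qed.

Lemma eq_vfvf {k J : K} (v : Hom J k) (f : Hom k J) :
  (v ⊙ f) ⊙ (v ⊙ f) = v ⊙ ((f ⊙ v) ⊙ f).
Proof. rewrite !assoc1. reflexivity. Qed.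

End Eqs.

Definition canon_str_g {K : TwoCat} {k J l : K} {v : Hom J k} {f : Hom k J}
  {t : Hom k k} (e : v ⊙ f = t) (ε : Cell (f ⊙ v) (id1 J)) (X : Hom l J)
  : Cell (t ⊙ (v ⊙ X)) (v ⊙ X) :=
  eqcell (eq_vidX v X) ∗ (v ◁ (ε ▷ X)) ∗ eqcell (eq_tvX e X).

(* Eilenberg–Moore object of a monad: adjunction f ⊣ v with unit η,    *)
(* counit ε, t = v f, μ = v ε f, such that X ↦ (vX, vεX) is an         *)
(* isomorphism K(l, J(t)) ≅ t-Alg(l) for every object l.               *)
Record EMObject (K : TwoCat) (k : K) (M : Monad k) := {
  emJ : K;
  emf : Hom k emJ;
  emv : Hom emJ k;
  emeps : Cell (emf ⊙ emv) (id1 emJ);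
  em_t : emv ⊙ emf = mt M;
  (* triangle identities, the unit being η (viewed as id ⇒ v f) *)
  em_tri_f : eqcell (idl1 emf) ∗ (emeps ▷ emf) ∗ eqcell (assoc1 emf emv emf)
             ∗ (emf ◁ (eqcell (eq_sym em_t) ∗ meta M))
             ∗ eqcell (eq_sym (idr1 emf)) = id2 emf;
  em_tri_v : eqcell (idr1 emv) ∗ (emv ◁ emeps)
             ∗ eqcell (eq_sym (assoc1 emv emf emv))
             ∗ ((eqcell (eq_sym em_t) ∗ meta M) ▷ emv)
             ∗ eqcell (eq_sym (idl1 emv)) = id2 emv;
  em_mu : eqcell (eq_sym em_t) ∗ mmu M ∗ eqcell (eq_tt em_t)
          = eqcell (eq_vidX emv emf) ∗ (emv ◁ (emeps ▷ emf))
            ∗ eqcell (eq_vfvf emv emf);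
  em_alg : forall (l : K) (X : Hom l emJ), is_alg M (canon_str_g em_t emeps X);
  em_obj : forall (l : K) (A : Hom l k) (α : Cell (mt M ⊙ A) A),
      is_alg M α ->
      exists! X : Hom l emJ, exists e : emv ⊙ X = A,
        eqcell e ∗ canon_str_g em_t emeps X
          ∗ eqcell (f_equal (fun Y => mt M ⊙ Y) (eq_sym e)) = α;
  em_mor_func : forall (l : K) (X Y : Hom l emJ) (ω : Cell X Y),
      is_alg_mor M (canon_str_g em_t emeps X) (canon_str_g em_t emeps Y) (emv ◁ ω);
  em_mor : forall (l : K) (X Y : Hom l emJ) (ρ : Cell (emv ⊙ X) (emv ⊙ Y)),
      is_alg_mor M (canon_str_g em_t emeps X) (canon_str_g em_t emeps Y) ρ ->
      exists! ω : Cell X Y, emv ◁ ω = ρ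
}.
Arguments emJ {K k M} E : rename.
Arguments emf {K k M} E : rename.
Arguments emv {K k M} E : rename.
Arguments emeps {K k M} E : rename.
Arguments em_t {K k M} E : rename.

Definition canon_str {K : TwoCat} {k l : K} {M : Monad k} (E : EMObject M)
  (X : Hom l (emJ E)) : Cell (mt M ⊙ (emv E ⊙ X)) (emv E ⊙ X) :=
  canon_str_g (em_t E) (emeps E) X.
Arguments canon_str {K k l M} E X.

Definition vcounit {K : TwoCat} {k k' : K} {M : Monad k} (E : EMObject M)
  (W : Hom k k') : Cell ((W ⊙ mt M) ⊙ emv E) (W ⊙ emv E) :=
  eqcell (eq_Wvid (emv E) W) ∗ (W ◁ (emv E ◁ emeps E))
  ∗ eqcell (eq_Wtv (em_t E) W).
Arguments vcounit {K k k' M} E W.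

Definition Wmu {K : TwoCat} {k k' : K} (M : Monad k) (W : Hom k k')
  : Cell ((W ⊙ mt M) ⊙ mt M) (W ⊙ mt M) :=
  (W ◁ mmu M) ∗ eqcell (eq_sym (assoc1 W (mt M) (mt M))).

Definition phit {K : TwoCat} {k k' : K} {t : Hom k k} {t' : Hom k' k'}
  {W : Hom k k'} (φ : Cell (t' ⊙ W) (W ⊙ t)) : Cell (t' ⊙ (W ⊙ t)) ((W ⊙ t) ⊙ t) :=
  (φ ▷ t) ∗ eqcell (assoc1 t' W t).

Definition EMw1 {K : TwoCat} {k k' : K} (M : Monad k) (M' : Monad k')
  {V : Hom k k'} (ψ : Cell (mt M' ⊙ V) (V ⊙ mt M)) : Prop :=
  Wmu M V ∗ phit ψ ∗ (mt M' ◁ ψ)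
  = ψ ∗ (mmu M' ▷ V) ∗ eqcell (assoc1 (mt M') (mt M') V).
Arguments EMw1 {K k k'} M M' {V} ψ.

Definition EMw2 {K : TwoCat} {k k' : K} (M : Monad k) (M' : Monad k')
  {V W : Hom k k'} (ψ : Cell (mt M' ⊙ V) (V ⊙ mt M))
  (φ : Cell (mt M' ⊙ W) (W ⊙ mt M)) (ϱ : Cell V (W ⊙ mt M)) : Prop :=
  Wmu M W ∗ (ϱ ▷ mt M) ∗ ψ = Wmu M W ∗ phit φ ∗ (mt M' ◁ ϱ)
  /\ ϱ = Wmu M W ∗ phit φ ∗ etaw M' (W ⊙ mt M) ∗ ϱ.
Arguments EMw2 {K k k'} M M' {V W} ψ φ ϱ.

(* J^w.  With J = J(t), J' = J(t'), the splitting V v ⇒ Ṽ ⇒ V v of the  *)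
(* idempotent V v ε ∗ ψ v ∗ η' V v is written with Ṽ = v' J^w(V,ψ)      *)
(* (the paper requires v' J^w(V,ψ) = Ṽ on the nose); π : V v ⇒ v' Vb,  *)
(* ι : v' Vb ⇒ V v, and Vb = J^w(V,ψ) is characterized by               *)
(* v' ε' Vb = π ∗ V v ε ∗ ψ v ∗ t' ι.                                   *)
Definition IsJw {K : TwoCat} {k k' : K} {M : Monad k} {M' : Monad k'}
  (E : EMObject M) (E' : EMObject M') {V : Hom k k'}
  (ψ : Cell (mt M' ⊙ V) (V ⊙ mt M)) (Vb : Hom (emJ E) (emJ E'))
  (π : Cell (V ⊙ emv E) (emv E' ⊙ Vb)) (ι : Cell (emv E' ⊙ Vb) (V ⊙ emv E))
  : Prop :=
  ι ∗ π = vcounit E V ∗ (ψ ▷ emv E) ∗ eqcell (assoc1 (mt M') V (emv E))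
          ∗ etaw M' (V ⊙ emv E)
  /\ π ∗ ι = id2 (emv E' ⊙ Vb)
  /\ canon_str E' Vb = π ∗ vcounit E V ∗ (ψ ▷ emv E)
                         ∗ eqcell (assoc1 (mt M') V (emv E)) ∗ (mt M' ◁ ι).
Arguments IsJw {K k k' M M'} E E' {V} ψ Vb π ι.

(* the 2-cell that v' J^w(ϱ) must equal: π ∗ W v ε ∗ ϱ v ∗ ι *)
Definition Jw2 {K : TwoCat} {k k' : K} {M : Monad k} {M' : Monad k'}
  (E : EMObject M) (E' : EMObject M') {V W : Hom k k'}
  {Vb Wb : Hom (emJ E) (emJ E')}
  (πW : Cell (W ⊙ emv E) (emv E' ⊙ Wb)) (ιV : Cell (emv E' ⊙ Vb) (V ⊙ emv E))
  (ϱ : Cell V (W ⊙ mt M)) : Cell (emv E' ⊙ Vb) (emv E' ⊙ Wb) :=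
  πW ∗ vcounit E W ∗ (ϱ ▷ emv E) ∗ ιV.
Arguments Jw2 {K k k' M M'} E E' {V W Vb Wb} πW ιV ϱ.

Definition weak_iota_lifting {K : TwoCat} {k k' J J' : K}
  {v : Hom J k} {v' : Hom J' k'} {V W : Hom k k'} {Vb Wb : Hom J J'}
  (ιV : Cell (v' ⊙ Vb) (V ⊙ v)) (ιW : Cell (v' ⊙ Wb) (W ⊙ v))
  (ω : Cell V W) (X : Cell Vb Wb) : Prop :=
  ιW ∗ (v' ◁ X) = (ω ▷ v) ∗ ιV.

Definition weak_pi_lifting {K : TwoCat} {k k' J J' : K}
  {v : Hom J k} {v' : Hom J' k'} {V W : Hom k k'} {Vb Wb : Hom J J'}
  (πV : Cell (V ⊙ v) (v' ⊙ Vb)) (πW : Cell (W ⊙ v) (v' ⊙ Wb))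
  (ω : Cell V W) (X : Cell Vb Wb) : Prop :=
  (v' ◁ X) ∗ πV = πW ∗ (ω ▷ v).

(* Main.v *)
Require Import Defs.
From Stdlib Require Import ProofIrrelevance Setoid.


Section Basics.
Context {K : TwoCat}.

Lemma vassoc {a b : K} {F G H I : Hom a b} (α : Cell H I) (β : Cell G H) (γ : Cell F G) :
  α ∗ (β ∗ γ) = (α ∗ β) ∗ γ.
Proof. exact (l_vassoc (tc_laws2 K) α β γ). Qed.
Lemma vidl {a b : K} {F G : Hom a b} (α : Cell F G) : id2 G ∗ α = α.
Proof. exact (l_vidl (tc_laws2 K) α). Qed.
Lemma vidr {a b : K} {F G : Hom a b} (α : Cell F G) : α ∗ id2 F = α.
Proof. exact (l_vidr (tc_laws2 K) α). Qed.
Lemma whl_v {a b c : K} (G : Hom b c) {F1 F2 F3 : Hom a b} (α : Cell F2 F3) (β : Cell F1 F2) :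
  G ◁ (α ∗ β) = (G ◁ α) ∗ (G ◁ β).
Proof. exact (l_whl_vcomp (tc_laws2 K) G α β). Qed.
Lemma whl_id {a b c : K} (G : Hom b c) (F : Hom a b) : G ◁ id2 F = id2 (G ⊙ F).
Proof. exact (l_whl_id2 (tc_laws2 K) G F). Qed.
Lemma whr_v {a b c : K} {G1 G2 G3 : Hom b c} (F : Hom a b) (α : Cell G2 G3) (β : Cell G1 G2) :
  (α ∗ β) ▷ F = (α ▷ F) ∗ (β ▷ F).
Proof. exact (l_whr_vcomp (tc_laws2 K) F α β). Qed.
Lemma whr_id {a b c : K} (G : Hom b c) (F : Hom a b) : id2 G ▷ F = id2 (G ⊙ F).
Proof. exact (l_whr_id2 (tc_laws2 K) G F). Qed.
Lemma xch {a b c : K} {G G' : Hom b c} {F F' : Hom a b} (α : Cell G G') (β : Cell F F') :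
  (G' ◁ β) ∗ (α ▷ F) = (α ▷ F') ∗ (G ◁ β).
Proof. exact (l_interchange (tc_laws2 K) α β). Qed.

Lemma eqcell_pi {a b : K} {F G : Hom a b} (e e' : F = G) : eqcell e = eqcell e'.
Proof. rewrite (proof_irrelevance _ e e'). reflexivity. Qed.
Lemma eqcell_id {a b : K} {F : Hom a b} (e : F = F) : eqcell e = id2 F.
Proof. rewrite (proof_irrelevance _ e eq_refl). reflexivity. Qed.
Lemma eqcell_tr {a b : K} {F G H : Hom a b} (e1 : G = H) (e2 : F = G) :
  eqcell e1 ∗ eqcell e2 = eqcell (eq_trans e2 e1).
Proof. destruct e1, e2. simpl. apply vidl. Qed.
Lemma eqcell_tr' {a b : K} {F G H I : Hom a b} (e1 : G = H) (e2 : F = G) (x : Cell I F) :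
  eqcell e1 ∗ (eqcell e2 ∗ x) = eqcell (eq_trans e2 e1) ∗ x.
Proof. rewrite vassoc, eqcell_tr. reflexivity. Qed.
Lemma whl_eqcell {a b c : K} (G : Hom b c) {F F' : Hom a b} (e : F = F') :
  G ◁ eqcell e = eqcell (f_equal (comp1 G) e).
Proof. destruct e. apply whl_id. Qed.
Lemma whr_eqcell {a b c : K} {G G' : Hom b c} (F : Hom a b) (e : G = G') :
  eqcell e ▷ F = eqcell (f_equal (fun g => g ⊙ F) e).
Proof. destruct e. apply whr_id. Qed.

Lemma whl_whl {a b c d : K} (H : Hom c d) (G : Hom b c) {F F' : Hom a b} (α : Cell F F') :
  H ◁ (G ◁ α) = eqcell (eq_sym (assoc1 H G F')) ∗ ((H ⊙ G) ◁ α) ∗ eqcell (assoc1 H G F).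
Proof.
  pose proof (l_whl_comp (tc_laws2 K) H G α) as E. unfold assoc1.
  rewrite <- E, vassoc, eqcell_tr, eqcell_id, vidl. reflexivity.
Qed.
Lemma whr_whr {a b c d : K} {H H' : Hom c d} (G : Hom b c) (F : Hom a b) (α : Cell H H') :
  (α ▷ G) ▷ F = eqcell (assoc1 H' G F) ∗ (α ▷ (G ⊙ F)) ∗ eqcell (eq_sym (assoc1 H G F)).
Proof.
  pose proof (l_whr_comp (tc_laws2 K) G F α) as E. unfold assoc1.
  rewrite vassoc, E, <- vassoc, eqcell_tr, eqcell_id, vidr. reflexivity.
Qed.
Lemma whl_whr {a b c d : K} (H : Hom c d) {G G' : Hom b c} (F : Hom a b) (β : Cell G G') :
  (H ◁ β) ▷ F = eqcell (assoc1 H G' F) ∗ (H ◁ (β ▷ F)) ∗ eqcell (eq_sym (assoc1 H G F)).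
Proof.
  pose proof (l_whl_whr (tc_laws2 K) H F β) as E. unfold assoc1.
  rewrite vassoc, E, <- vassoc, eqcell_tr, eqcell_id, vidr. reflexivity.
Qed.
Lemma whl_id1 {a b : K} {F F' : Hom a b} (α : Cell F F') :
  id1 b ◁ α = eqcell (eq_sym (idl1 F')) ∗ α ∗ eqcell (idl1 F).
Proof.
  pose proof (l_whl_id1 (tc_laws2 K) α) as E. unfold idl1.
  rewrite <- E, vassoc, eqcell_tr, eqcell_id, vidl. reflexivity.
Qed.
Lemma whr_id1 {a b : K} {G G' : Hom a b} (α : Cell G G') :
  α ▷ id1 a = eqcell (eq_sym (idr1 G')) ∗ α ∗ eqcell (idr1 G).
Proof.
  pose proof (l_whr_id1 (tc_laws2 K) α) as E. unfold idr1.
  rewrite <- E, vassoc, eqcell_tr, eqcell_id, vidl. reflexivity.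
Qed.

Lemma whl_id1' {a b : K} {F F' : Hom a b} (α : Cell F F') :
  eqcell (eq_sym (idl1 F')) ∗ α = (id1 b ◁ α) ∗ eqcell (eq_sym (idl1 F)).
Proof. rewrite whl_id1, <- !vassoc, eqcell_tr, eqcell_id, vidr. reflexivity. Qed.

Lemma whl_comp {a b c d : K} (H : Hom c d) (G : Hom b c) {F F' : Hom a b} (α : Cell F F') :
  (H ⊙ G) ◁ α = eqcell (assoc1 H G F') ∗ (H ◁ (G ◁ α)) ∗ eqcell (eq_sym (assoc1 H G F)).
Proof. rewrite whl_whl, !vassoc, eqcell_tr, eqcell_id, vidl, <- vassoc, eqcell_tr, eqcell_id, vidr. reflexivity. Qed.

Lemma whr_tr {a b c : K} {A A' : Hom b c} (ω : Cell A A') {X X' : Hom a b} (e : X = X') :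
  ω ▷ X = eqcell (f_equal (comp1 A') (eq_sym e)) ∗ (ω ▷ X') ∗ eqcell (f_equal (comp1 A) e).
Proof. destruct e. simpl. rewrite vidl, vidr. reflexivity. Qed.
Lemma whl_tr {a b c : K} {G G' : Hom b c} (e : G = G') {F F' : Hom a b} (α : Cell F F') :
  G ◁ α = eqcell (f_equal (fun g => g ⊙ F') (eq_sym e)) ∗ (G' ◁ α) ∗ eqcell (f_equal (fun g => g ⊙ F) e).
Proof. destruct e. simpl. rewrite vidl, vidr. reflexivity. Qed.

End Basics.

Lemma ra2 {K : TwoCat} {a b : K} {F G H : Hom a b} {a1 : Cell G H} {b1 : Cell F G} {c : Cell F H} :
  a1 ∗ b1 = c -> forall (I : Hom a b) (x : Cell I F), a1 ∗ (b1 ∗ x) = c ∗ x.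
Proof. intros e I x. rewrite vassoc, e. reflexivity. Qed.
Lemma ra3 {K : TwoCat} {a b : K} {F G H P : Hom a b} {a1 : Cell H P} {b1 : Cell G H} {c1 : Cell F G} {c : Cell F P} :
  a1 ∗ (b1 ∗ c1) = c -> forall (I : Hom a b) (x : Cell I F), a1 ∗ (b1 ∗ (c1 ∗ x)) = c ∗ x.
Proof. intros e I x. rewrite (vassoc b1), vassoc, e. reflexivity. Qed.

Ltac nrm := repeat (rewrite ?whl_v, ?whr_v, ?whl_id, ?whr_id, ?whl_eqcell, ?whr_eqcell, ?vidl, ?vidr);
  repeat rewrite <- vassoc;
  repeat (rewrite ?eqcell_tr', ?eqcell_tr);
  repeat (rewrite eqcell_id; rewrite ?vidl, ?vidr).

Ltac eqc := repeat match goal with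
 | |- ?x = ?x => reflexivity
 | |- eqcell _ = eqcell _ => apply eqcell_pi
 | |- vcomp _ _ = vcomp _ _ => refine (f_equal2 (fun x y => vcomp x y) _ _)
 end.

Ltac synch H := repeat match type of H with context [@eqcell ?K0 ?a ?b ?F ?G ?e] =>
   match type of H with context [@eqcell K0 a b F G ?e'] =>
      assert_fails (constr_eq e e'); rewrite (eqcell_pi e' e) in H end end.
Ltac sync H := synch H; repeat match type of H with context [@eqcell ?K0 ?a ?b ?F ?G ?e] =>
   match goal with |- context [@eqcell K0 a b F G ?e'] =>
      assert_fails (constr_eq e e'); rewrite (eqcell_pi e' e) end end.

Section MonadLemmas.
Context {K : TwoCat} {k : K} (M : Monad k).

Definition muw {a : K} (Y : Hom a k) : Cell (mt M ⊙ (mt M ⊙ Y)) (mt M ⊙ Y) :=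
  (mmu M ▷ Y) ∗ eqcell (assoc1 (mt M) (mt M) Y).

Lemma etaw_nat {a : K} {X Y : Hom a k} (α : Cell X Y) :
  etaw M Y ∗ α = (mt M ◁ α) ∗ etaw M X.
Proof.
  unfold etaw. rewrite <- !vassoc.
  rewrite whl_id1'. rewrite !vassoc, xch. nrm. eqc.
Qed.

Lemma muw_etaw_r {a : K} (Y : Hom a k) : muw Y ∗ (mt M ◁ etaw M Y) = id2 _.
Proof.
  pose proof (f_equal (fun c => c ▷ Y) (mon_unit_r M)) as H. simpl in H.
  rewrite whr_id, !whr_v, whl_whr in H. unfold muw, etaw. revert H. nrm. intro H. rewrite <- H. eqc.
Qed.

Lemma muw_etaw_l {a : K} (Y : Hom a k) : muw Y ∗ etaw M (mt M ⊙ Y) = id2 _.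
Proof.
  pose proof (f_equal (fun c => c ▷ Y) (mon_unit_l M)) as H. simpl in H.
  rewrite whr_id, !whr_v, whr_whr in H. unfold muw, etaw. revert H. nrm. intro H. rewrite <- H. eqc.
Qed.
End MonadLemmas.

Section EMLemmas.
Context {K : TwoCat} {k : K} (M : Monad k) (E : EMObject M).

Definition e_tv : mt M ⊙ emv E = emv E ⊙ (emf E ⊙ emv E) :=
  eq_trans (f_equal (fun x => x ⊙ emv E) (eq_sym (em_t E))) (eq_sym (assoc1 (emv E) (emf E) (emv E))).

Lemma vcounit_nat {k' : K} {A A' : Hom k k'} (ω : Cell A A') :
  vcounit E A' ∗ ((ω ▷ mt M) ▷ emv E) = (ω ▷ emv E) ∗ vcounit E A.
Proof.
  unfold vcounit. rewrite whr_whr, (whr_tr ω e_tv). nrm.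
rewrite (ra2 (xch ω (emv E ◁ emeps E))). nrm. rewrite (whr_tr ω (idr1 (emv E))). nrm. eqc. Qed.

End EMLemmas.
Section EM2.
Context {K : TwoCat} {k : K} (M : Monad k) (E : EMObject M).

Lemma core_eps :
  emeps E ∗ eqcell (idl1 (emf E ⊙ emv E)) ∗ (emeps E ▷ (emf E ⊙ emv E))
  = emeps E ∗ eqcell (idr1 (emf E ⊙ emv E)) ∗ ((emf E ⊙ emv E) ◁ emeps E).
Proof.
  pose proof (xch (emeps E) (emeps E)) as H.
  rewrite whl_id1, whr_id1 in H. revert H; nrm; intro H.
  apply (f_equal (fun c => eqcell (idl1 (id1 (emJ E))) ∗ c)) in H. revert H; nrm; intro H.
  sync H. rewrite H. eqc.
Qed.

Lemma mu_eq : mmu M = eqcell (em_t E) ∗ eqcell (eq_vidX (emv E) (emf E)) ∗ (emv E ◁ (emeps E ▷ emf E))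
  ∗ eqcell (eq_vfvf (emv E) (emf E)) ∗ eqcell (eq_sym (eq_tt (em_t E))).
Proof.
  transitivity (eqcell (em_t E) ∗ ((eqcell (eq_sym (em_t E)) ∗ mmu M ∗ eqcell (eq_tt (em_t E))) ∗ eqcell (eq_sym (eq_tt (em_t E))))).
  { nrm. reflexivity. }
  rewrite (em_mu E). nrm. reflexivity.
Qed.

Lemma vcounit_mu {k' : K} (A : Hom k k') :
  vcounit E A ∗ (Wmu M A ▷ emv E) = vcounit E A ∗ vcounit E (A ⊙ mt M).
Proof.
  unfold vcounit, Wmu. rewrite mu_eq. nrm.
  rewrite !whl_whr, whr_whr. nrm.
  rewrite (whl_tr (f_equal (comp1 A) (eq_sym (em_t E))) (emv E ◁ emeps E)).
  rewrite !whl_comp. nrm.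
  pose proof (f_equal (fun c => A ◁ (emv E ◁ c)) core_eps) as H. simpl in H.
  rewrite whl_comp in H. revert H; nrm; intro H. sync H.
  rewrite (ra3 H). nrm. eqc.
Qed.

Definition U {k' : K} {A B : Hom k k'} (ρ : Cell B (A ⊙ mt M)) : Cell (B ⊙ emv E) (A ⊙ emv E) :=
  vcounit E A ∗ (ρ ▷ emv E).

Lemma U_kleisli {k' : K} {A B C : Hom k k'} (ρ : Cell B (A ⊙ mt M)) (σ : Cell C (B ⊙ mt M)) :
  U (Wmu M A ∗ (ρ ▷ mt M) ∗ σ) = U ρ ∗ U σ.
Proof.
  unfold U. nrm. rewrite (ra2 (vcounit_mu A)). nrm. rewrite (ra2 (vcounit_nat M E ρ)). nrm. reflexivity.
Qed.

Lemma U_whr {k' : K} {A B C : Hom k k'} (ρ : Cell B (A ⊙ mt M)) (α : Cell C B) :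
  U (ρ ∗ α) = U ρ ∗ (α ▷ emv E).
Proof. unfold U. nrm. reflexivity. Qed.

Lemma U_nat {k' : K} {A A' B : Hom k k'} (ω : Cell A A') (ρ : Cell B (A ⊙ mt M)) :
  U ((ω ▷ mt M) ∗ ρ) = (ω ▷ emv E) ∗ U ρ.
Proof. unfold U. nrm. rewrite (ra2 (vcounit_nat M E ω)). nrm. reflexivity. Qed.

Lemma vcounit_whl {k' : K} {k'' : K} (G : Hom k' k'') (A : Hom k k') :
  vcounit E (G ⊙ A) = eqcell (assoc1 G A (emv E)) ∗ (G ◁ vcounit E A)
     ∗ eqcell (eq_trans (f_equal (fun x => x ⊙ emv E) (eq_sym (assoc1 G A (mt M)))) (eq_sym (assoc1 G (A ⊙ mt M) (emv E)))).
Proof.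
  unfold vcounit. rewrite whl_comp. nrm. eqc.
Qed.

Lemma U_whl {k' : K} {k'' : K} (G : Hom k' k'') {A X : Hom k k'} (ρ : Cell X (A ⊙ mt M)) :
  U (eqcell (assoc1 G A (mt M)) ∗ (G ◁ ρ)) =
  eqcell (assoc1 G A (emv E)) ∗ (G ◁ U ρ) ∗ eqcell (eq_sym (assoc1 G X (emv E))).
Proof.
  unfold U. rewrite vcounit_whl. nrm. rewrite (whl_whr G (emv E) ρ). nrm. eqc.
Qed.

Lemma counit_unit {k' : K} (A : Hom k k') :
  eqcell (eq_trans (eq_sym (assoc1 A (emv E) (emf E))) (f_equal (comp1 A) (em_t E)))
  ∗ (vcounit E A ▷ emf E)
  ∗ eqcell (eq_trans (f_equal (comp1 (A ⊙ mt M)) (eq_sym (em_t E))) (assoc1 (A ⊙ mt M) (emv E) (emf E)))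
  ∗ ((A ⊙ mt M) ◁ meta M) ∗ eqcell (eq_sym (idr1 (A ⊙ mt M))) = id2 (A ⊙ mt M).
Proof.
  pose proof (f_equal (fun c => A ◁ c) (mon_unit_r M)) as H. simpl in H.
  rewrite mu_eq in H. rewrite whl_id in H. revert H; nrm; intro H.
  unfold vcounit. rewrite whl_comp. nrm. rewrite !whl_whr. nrm.
  rewrite <- H. eqc.
Qed.

Lemma counit_unit_ra {k' : K} (A : Hom k k') {X : Hom k k'} (x : Cell X (A ⊙ mt M)) :
  eqcell (eq_trans (eq_sym (assoc1 A (emv E) (emf E))) (f_equal (comp1 A) (em_t E)))
  ∗ ((vcounit E A ▷ emf E)
  ∗ (eqcell (eq_trans (f_equal (comp1 (A ⊙ mt M)) (eq_sym (em_t E))) (assoc1 (A ⊙ mt M) (emv E) (emf E)))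
  ∗ (((A ⊙ mt M) ◁ meta M) ∗ (eqcell (eq_sym (idr1 (A ⊙ mt M))) ∗ x)))) = x.
Proof.
  pose proof (counit_unit A) as H. rewrite !vassoc in H. rewrite !vassoc, H, vidl. reflexivity.
Qed.

Lemma U_inj {k' : K} {A B : Hom k k'} (ρ ρ' : Cell B (A ⊙ mt M)) : U ρ = U ρ' -> ρ = ρ'.
Proof.
  intro HU.
  assert (Hr : forall r : Cell B (A ⊙ mt M),
    r = eqcell (eq_trans (eq_sym (assoc1 A (emv E) (emf E))) (f_equal (comp1 A) (em_t E)))
      ∗ (U r ▷ emf E)
      ∗ eqcell (eq_trans (f_equal (comp1 B) (eq_sym (em_t E))) (assoc1 B (emv E) (emf E)))
      ∗ (B ◁ meta M) ∗ eqcell (eq_sym (idr1 B))).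
  { intro r. unfold U. rewrite whr_v. rewrite whr_whr. rewrite (whr_tr r (em_t E)). nrm.
    rewrite (ra2 (eq_sym (xch r (meta M)))). rewrite whr_id1. nrm.
    rewrite counit_unit_ra. reflexivity. }
  rewrite (Hr ρ), (Hr ρ'), HU. reflexivity.
Qed.

End EM2.

Ltac via H := etransitivity; [ | etransitivity; [ apply H | ] ]; [ nrm; eqc | nrm; eqc ].

Section AW.
Context {K : TwoCat} {k k' : K} (M : Monad k) (M' : Monad k') (E : EMObject M).

Definition aw {X : Hom k k'} (χ : Cell (mt M' ⊙ X) (X ⊙ mt M)) : Cell (mt M' ⊙ (X ⊙ emv E)) (X ⊙ emv E) :=
  vcounit E X ∗ (χ ▷ emv E) ∗ eqcell (assoc1 (mt M') X (emv E)).
Definition ew {X : Hom k k'} (χ : Cell (mt M' ⊙ X) (X ⊙ mt M)) : Cell (X ⊙ emv E) (X ⊙ emv E) :=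
  aw χ ∗ etaw M' (X ⊙ emv E).

Lemma U_aw {X : Hom k k'} (χ : Cell (mt M' ⊙ X) (X ⊙ mt M)) :
  U M E χ = aw χ ∗ eqcell (eq_sym (assoc1 (mt M') X (emv E))).
Proof. unfold aw, U. nrm. reflexivity. Qed.

Lemma etaw_whr (X : Hom k k') :
  etaw M' X ▷ emv E = eqcell (assoc1 (mt M') X (emv E)) ∗ etaw M' (X ⊙ emv E).
Proof. unfold etaw. nrm. rewrite whr_whr. nrm. eqc. Qed.

Lemma aw_assoc {X : Hom k k'} (χ : Cell (mt M' ⊙ X) (X ⊙ mt M)) (Hχ : EMw1 M M' χ) :
  aw χ ∗ (mt M' ◁ aw χ) = aw χ ∗ muw M' (X ⊙ emv E).
Proof.
  pose proof (f_equal (U M E) Hχ) as H. unfold phit in H.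
  revert H; nrm; intro H.
  rewrite U_kleisli, U_whl, U_whr, U_aw in H. unfold muw.
  rewrite whr_v, whr_whr in H. revert H; nrm; intro H.
  apply (f_equal (fun c => c ∗ eqcell (eq_trans (f_equal (comp1 (mt M')) (assoc1 (mt M') X (emv E))) (assoc1 (mt M') (mt M' ⊙ X) (emv E))))) in H.
  via H. Qed.


Lemma aw_ew {X : Hom k k'} (χ : Cell (mt M' ⊙ X) (X ⊙ mt M)) (Hχ : EMw1 M M' χ) :
  aw χ ∗ (mt M' ◁ ew χ) = aw χ.
Proof. unfold ew. rewrite whl_v, vassoc, aw_assoc, <- vassoc, muw_etaw_r, vidr by exact Hχ. reflexivity. Qed.

Lemma ew_aw {X : Hom k k'} (χ : Cell (mt M' ⊙ X) (X ⊙ mt M)) (Hχ : EMw1 M M' χ) :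
  ew χ ∗ aw χ = aw χ.
Proof. unfold ew. rewrite <- vassoc, etaw_nat, vassoc, aw_assoc, <- vassoc, muw_etaw_l, vidr by exact Hχ. reflexivity. Qed.

Lemma ew_ew {X : Hom k k'} (χ : Cell (mt M' ⊙ X) (X ⊙ mt M)) (Hχ : EMw1 M M' χ) :
  ew χ ∗ ew χ = ew χ.
Proof. unfold ew at 2 3. rewrite vassoc, ew_aw by exact Hχ. reflexivity. Qed.

Lemma U_KL {W Y : Hom k k'} (φ : Cell (mt M' ⊙ W) (W ⊙ mt M)) (ρ : Cell Y (W ⊙ mt M)) :
  U M E (Wmu M W ∗ phit φ ∗ (mt M' ◁ ρ)) = aw φ ∗ (mt M' ◁ U M E ρ) ∗ eqcell (eq_sym (assoc1 (mt M') Y (emv E))).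
Proof. unfold phit. nrm. rewrite U_kleisli, U_whl, U_aw. nrm. eqc. Qed.

Lemma U_KL3 {W Y : Hom k k'} (φ : Cell (mt M' ⊙ W) (W ⊙ mt M)) (ρ : Cell Y (W ⊙ mt M)) :
  U M E (Wmu M W ∗ phit φ ∗ etaw M' (W ⊙ mt M) ∗ ρ) = ew φ ∗ U M E ρ.
Proof.
  rewrite etaw_nat. rewrite (vassoc (phit φ)), (vassoc (Wmu M W)), U_whr, U_KL, etaw_whr.
  nrm. rewrite <- etaw_nat. unfold ew. nrm. reflexivity.
Qed.
End AW.

Section VAlg.
Context {K : TwoCat} {J k' : K} (M' : Monad k').
Context {P Q PV PW : Hom J k'} (aP : Cell (mt M' ⊙ P) P) (aQ : Cell (mt M' ⊙ Q) Q)
  (eP : Cell P P) (eQ : Cell Q Q)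
  (HeP : eP = aP ∗ etaw M' P) (HeQ : eQ = aQ ∗ etaw M' Q)
  (HaeP : aP ∗ (mt M' ◁ eP) = aP) (HaeQ : aQ ∗ (mt M' ◁ eQ) = aQ)
  (HeaP : eP ∗ aP = aP) (HeaQ : eQ ∗ aQ = aQ)
  (ιP : Cell PV P) (πP : Cell P PV) (ιQ : Cell PW Q) (πQ : Cell Q PW)
  (HipP : ιP ∗ πP = eP) (HpiP : πP ∗ ιP = id2 PV)
  (HipQ : ιQ ∗ πQ = eQ) (HpiQ : πQ ∗ ιQ = id2 PW)
  (wv : Cell P Q).

Let t' := mt M'.

Lemma LeιP : eP ∗ ιP = ιP.
Proof. rewrite <- HipP, <- vassoc, HpiP, vidr. reflexivity. Qed.
Lemma LπeP : πP ∗ eP = πP.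
Proof. rewrite <- HipP, vassoc, HpiP, vidl. reflexivity. Qed.
Lemma LeιQ : eQ ∗ ιQ = ιQ.
Proof. rewrite <- HipQ, <- vassoc, HpiQ, vidr. reflexivity. Qed.
Lemma LπeQ : πQ ∗ eQ = πQ.
Proof. rewrite <- HipQ, vassoc, HpiQ, vidl. reflexivity. Qed.
Lemma LeeP : eP ∗ eP = eP.
Proof. rewrite <- HipP at 2 3. rewrite vassoc, LeιP. reflexivity. Qed.
Lemma LeeQ : eQ ∗ eQ = eQ.
Proof. rewrite <- HipQ at 2 3. rewrite vassoc, LeιQ. reflexivity. Qed.

Definition c1' := wv ∗ aP = aQ ∗ (mt M' ◁ (wv ∗ eP)).
Definition c2' := aQ ∗ (mt M' ◁ wv) = eQ ∗ wv ∗ aP.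
Definition c3' := aQ ∗ (mt M' ◁ wv) = wv ∗ aP.
Definition ρL := πQ ∗ wv ∗ ιP.
Definition alg := (πQ ∗ aQ ∗ (mt M' ◁ ιQ)) ∗ (mt M' ◁ ρL) = ρL ∗ (πP ∗ aP ∗ (mt M' ◁ ιP)).
Definition iii1 := alg /\ ιQ ∗ ρL = wv ∗ ιP.
Definition iii2 := alg /\ ρL ∗ πP = πQ ∗ wv.
Definition iii3 := alg /\ ιQ ∗ πQ ∗ wv = wv ∗ ιP ∗ πP.

Lemma K1 : c1' -> eQ ∗ wv ∗ eP = wv ∗ eP.
Proof.
  unfold c1'; intro H.
  rewrite HeQ, <- vassoc, (etaw_nat M' (wv ∗ eP)), vassoc, <- H, <- vassoc, <- HeP. reflexivity.
Qed.
Lemma K2 : c2' -> eQ ∗ wv ∗ eP = eQ ∗ wv.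
Proof.
  unfold c2'; intro H.
  rewrite HeP, (vassoc wv), (vassoc eQ), <- H, <- vassoc, <- (etaw_nat M' wv), vassoc, <- HeQ.
  reflexivity.
Qed.


Definition alg' := aQ ∗ (mt M' ◁ (wv ∗ eP)) = eQ ∗ (wv ∗ aP).
Definition d1 := eQ ∗ (wv ∗ eP) = wv ∗ eP.
Definition d2 := eQ ∗ (wv ∗ eP) = eQ ∗ wv.

Lemma alg_L : (πQ ∗ aQ ∗ (mt M' ◁ ιQ)) ∗ (mt M' ◁ ρL) = πQ ∗ (aQ ∗ (mt M' ◁ (wv ∗ ιP))).
Proof.
  unfold ρL. rewrite (whl_v _ πQ), <- !vassoc, (vassoc (mt M' ◁ ιQ)), <- (whl_v (mt M') ιQ πQ), HipQ.
  rewrite (vassoc aQ), HaeQ. reflexivity.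
Qed.
Lemma alg_R : ρL ∗ (πP ∗ aP ∗ (mt M' ◁ ιP)) = πQ ∗ (wv ∗ (aP ∗ (mt M' ◁ ιP))).
Proof.
  unfold ρL. rewrite <- !vassoc, (vassoc ιP πP), HipP, (vassoc eP aP), HeaP. reflexivity.
Qed.
Lemma EqA : aQ ∗ (mt M' ◁ (wv ∗ eP)) = ιQ ∗ ((πQ ∗ (aQ ∗ (mt M' ◁ (wv ∗ ιP)))) ∗ (mt M' ◁ πP)).
Proof.
  symmetry. rewrite <- !vassoc, (vassoc ιQ πQ), HipQ, (vassoc eQ aQ), HeaQ.
  rewrite <- whl_v, <- vassoc, HipP. reflexivity.
Qed.
Lemma EqB : eQ ∗ (wv ∗ aP) = ιQ ∗ ((πQ ∗ (wv ∗ (aP ∗ (mt M' ◁ ιP)))) ∗ (mt M' ◁ πP)).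
Proof.
  symmetry. rewrite <- !vassoc, (vassoc ιQ πQ), HipQ.
  rewrite <- (whl_v (mt M') ιP πP), HipP, HaeP. reflexivity.
Qed.
Lemma EqC : πQ ∗ (aQ ∗ (mt M' ◁ (wv ∗ ιP))) = πQ ∗ ((aQ ∗ (mt M' ◁ (wv ∗ eP))) ∗ (mt M' ◁ ιP)).
Proof.
  rewrite <- (vassoc aQ), <- whl_v, <- vassoc, LeιP. reflexivity.
Qed.
Lemma EqD : πQ ∗ (wv ∗ (aP ∗ (mt M' ◁ ιP))) = πQ ∗ ((eQ ∗ (wv ∗ aP)) ∗ (mt M' ◁ ιP)).
Proof.
  rewrite !vassoc, LπeQ. reflexivity.
Qed.

Lemma alg_iff : alg <-> alg'.
Proof.
  unfold alg, alg'. rewrite alg_L, alg_R. split; intro H.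
  - rewrite EqA, EqB, H. reflexivity.
  - rewrite EqC, EqD, H. reflexivity.
Qed.

Lemma d1_iff : ιQ ∗ ρL = wv ∗ ιP <-> d1.
Proof.
  unfold ρL, d1. rewrite (vassoc ιQ πQ), HipQ. split; intro H.
  - rewrite <- HipP, (vassoc wv ιP πP), (vassoc eQ (wv ∗ ιP) πP), H. reflexivity.
  - rewrite <- LeιP, (vassoc wv eP), (vassoc eQ (wv ∗ eP)), H. reflexivity.
Qed.

Lemma d2_iff : ρL ∗ πP = πQ ∗ wv <-> d2.
Proof.
  unfold ρL, d2. rewrite <- !vassoc, HipP. split; intro H.
  - rewrite <- HipQ, <- !vassoc, H. reflexivity.
  - rewrite <- LπeQ, <- !vassoc, H. reflexivity.
Qed.

Lemma d3_iff : ιQ ∗ πQ ∗ wv = wv ∗ ιP ∗ πP <-> d1 /\ d2.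
Proof.
  unfold d1, d2. rewrite (vassoc ιQ πQ), HipQ, HipP. split.
  - intro H. split.
    + rewrite (vassoc eQ wv), H, <- vassoc, LeeP. reflexivity.
    + rewrite <- H, vassoc, LeeQ. reflexivity.
  - intros [H1 H2]. rewrite <- H2. exact H1.
Qed.

Lemma c1_iff : c1' <-> alg' /\ d1.
Proof.
  unfold c1', alg', d1. split.
  - intro H. assert (D : eQ ∗ (wv ∗ eP) = wv ∗ eP).
    { apply K1. exact H. }
    split; [| exact D].
    rewrite <- H, <- HeaP, (vassoc wv eP), (vassoc eQ (wv ∗ eP)), D. reflexivity.
  - intros [H1 H2]. rewrite H1, <- HeaP, (vassoc wv eP), (vassoc eQ (wv ∗ eP)), H2. reflexivity.
Qed.

Lemma c2_aux : d2 -> aQ ∗ (mt M' ◁ (wv ∗ eP)) = aQ ∗ (mt M' ◁ wv).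
Proof.
  unfold d2. intro D. rewrite <- HaeQ at 1. rewrite <- vassoc, <- whl_v, D, whl_v, vassoc, HaeQ.
  reflexivity.
Qed.

Lemma c2_iff : c2' <-> alg' /\ d2.
Proof.
  unfold c2', alg'. split.
  - intro H. assert (D : d2) by (apply K2; exact H).
    split; [| exact D]. rewrite c2_aux by exact D. exact H.
  - intros [H1 H2]. rewrite <- c2_aux by exact H2. exact H1.
Qed.

Lemma c3_iff : c3' <-> c1' /\ c2'.
Proof.
  unfold c3', c1', c2'. split.
  - intro H. split.
    + rewrite whl_v, vassoc, H, <- vassoc, HaeP. reflexivity.
    + rewrite <- H, vassoc, HeaQ. reflexivity.
  - intros [H1 H2].
    assert (D1 : d1) by (apply K1; exact H1).
    assert (D2 : d2) by (apply K2; exact H2).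
    unfold d1, d2 in *. rewrite H1, <- D1, D2, whl_v, vassoc, HaeQ. reflexivity.
Qed.
End VAlg.

Lemma cancel_eqr {K : TwoCat} {a b : K} {F G H : Hom a b} (e : F = G) (x y : Cell G H) :
  x ∗ eqcell e = y ∗ eqcell e <-> x = y.
Proof.
  split; [| intros ->; reflexivity].
  intro Hx. apply (f_equal (fun c => c ∗ eqcell (eq_sym e))) in Hx.
  rewrite <- !vassoc, eqcell_tr, eqcell_id, !vidr in Hx. exact Hx.
Qed.

Section Main2.
Context {K : TwoCat} {k k' : K} (M : Monad k) (M' : Monad k') (E : EMObject M).
Context {V W : Hom k k'} (ψ : Cell (mt M' ⊙ V) (V ⊙ mt M)) (φ : Cell (mt M' ⊙ W) (W ⊙ mt M))
  (Hψ : EMw1 M M' ψ) (Hφ : EMw1 M M' φ) (ω : Cell V W).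


Lemma Uρ1 : U M E ((ω ▷ mt M) ∗ ψ ∗ etaw M' V) = (ω ▷ emv E) ∗ ew M M' E ψ.
Proof. rewrite U_nat, U_whr, U_aw, etaw_whr. unfold ew. nrm. reflexivity. Qed.

Lemma Uρ2 : U M E (φ ∗ etaw M' W ∗ ω) = ew M M' E φ ∗ (ω ▷ emv E).
Proof. rewrite (vassoc φ), U_whr, U_whr, U_aw, etaw_whr. unfold ew. nrm. reflexivity. Qed.

Lemma Ulhs1 : U M E ((ω ▷ mt M) ∗ ψ) = ((ω ▷ emv E) ∗ aw M M' E ψ) ∗ eqcell (eq_sym (assoc1 (mt M') V (emv E))).
Proof. rewrite U_nat, U_aw. nrm. reflexivity. Qed.

Lemma Ulhs2 : U M E (φ ∗ (mt M' ◁ ω)) = (aw M M' E φ ∗ (mt M' ◁ (ω ▷ emv E))) ∗ eqcell (eq_sym (assoc1 (mt M') V (emv E))).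
Proof. rewrite U_whr, U_aw, whl_whr. nrm. eqc. Qed.

Notation aP := (aw M M' E ψ).
Notation aQ := (aw M M' E φ).
Notation eP := (ew M M' E ψ).
Notation eQ := (ew M M' E φ).
Notation wv := (ω ▷ emv E).

Lemma c1_K :
  (ω ▷ mt M) ∗ ψ = Wmu M W ∗ phit φ ∗ (mt M' ◁ (ω ▷ mt M)) ∗ (mt M' ◁ ψ) ∗ (mt M' ◁ etaw M' V)
  <-> c1' M' aP aQ eP wv.
Proof.
  unfold c1'. rewrite <- !whl_v.
  split; intro H.
  - apply (f_equal (U M E)) in H. rewrite Ulhs1, U_KL, Uρ1 in H.
    rewrite !vassoc in H. apply cancel_eqr in H. exact H.
  - apply (U_inj M E). rewrite Ulhs1, U_KL, Uρ1. rewrite (vassoc aQ), H. reflexivity.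
Qed.


Lemma c2_K :
  φ ∗ (mt M' ◁ ω) = Wmu M W ∗ phit φ ∗ etaw M' (W ⊙ mt M) ∗ (ω ▷ mt M) ∗ ψ
  <-> c2' M' aP aQ eQ wv.
Proof.
  unfold c2'. split; intro H.
  - apply (f_equal (U M E)) in H. rewrite Ulhs2, U_KL3, Ulhs1 in H.
    rewrite !vassoc in H. apply cancel_eqr in H. rewrite <- !vassoc in H. exact H.
  - apply (U_inj M E). rewrite Ulhs2, U_KL3, Ulhs1. rewrite H, <- !vassoc. reflexivity.
Qed.

Lemma c3_K : φ ∗ (mt M' ◁ ω) = (ω ▷ mt M) ∗ ψ <-> c3' M' aP aQ wv.
Proof.
  unfold c3'. split; intro H.
  - apply (f_equal (U M E)) in H. rewrite Ulhs2, Ulhs1 in H.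
    apply cancel_eqr in H. exact H.
  - apply (U_inj M E). rewrite Ulhs2, Ulhs1, H. reflexivity.
Qed.

Lemma EMw2_1 : EMw2 M M' ψ φ ((ω ▷ mt M) ∗ ψ ∗ etaw M' V) <-> c1' M' aP aQ eP wv.
Proof.
  unfold EMw2, c1'. split.
  - intros [Ha _]. apply (f_equal (U M E)) in Ha.
    rewrite U_kleisli, U_KL, Uρ1, U_aw in Ha. rewrite <- !vassoc in Ha.
    rewrite !vassoc in Ha. apply cancel_eqr in Ha. rewrite <- !vassoc in Ha.
    rewrite (ew_aw M M' E ψ Hψ) in Ha. exact Ha.
  - intro H. assert (D : eQ ∗ wv ∗ eP = wv ∗ eP) by (apply (K1 M' aP aQ eP eQ eq_refl eq_refl wv H)).
    split.
    + apply (U_inj M E). rewrite U_kleisli, U_KL, Uρ1, U_aw.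
      rewrite <- !vassoc, (vassoc eP), (ew_aw M M' E ψ Hψ), (vassoc wv aP), H. nrm. reflexivity.
    + apply (U_inj M E). rewrite U_KL3, Uρ1. symmetry. exact D.
Qed.

Lemma EMw2_2 : EMw2 M M' ψ φ (φ ∗ etaw M' W ∗ ω) <-> c2' M' aP aQ eQ wv.
Proof.
  unfold EMw2, c2'. split.
  - intros [Ha _]. apply (f_equal (U M E)) in Ha.
    rewrite U_kleisli, U_KL, Uρ2, U_aw in Ha. rewrite <- !vassoc in Ha.
    rewrite !vassoc in Ha. apply cancel_eqr in Ha. rewrite <- !vassoc in Ha.
    rewrite whl_v, (vassoc aQ), (aw_ew M M' E φ Hφ) in Ha.
    symmetry; exact Ha.
  - intro H. split.
    + apply (U_inj M E). rewrite U_kleisli, U_KL, Uρ2, U_aw.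
      rewrite whl_v, <- !vassoc, (vassoc aQ (mt M' ◁ eQ)), (aw_ew M M' E φ Hφ), (vassoc aQ), H. nrm. reflexivity.
    + apply (U_inj M E). rewrite U_KL3, Uρ2, vassoc, (ew_ew M M' E φ Hφ). reflexivity.
Qed.

Lemma ρ21 : φ ∗ (mt M' ◁ ω) = (ω ▷ mt M) ∗ ψ ->
  φ ∗ etaw M' W ∗ ω = (ω ▷ mt M) ∗ ψ ∗ etaw M' V.
Proof. intro H. rewrite (etaw_nat M' ω), vassoc, H, <- vassoc. reflexivity. Qed.

End Main2.

Theorem proposition4p3 (K : TwoCat)
  (EM : forall (k : K) (M : Monad k), EMObject M)
  (Hsplit : idem_split K)
  (k k' : K) (M : Monad k) (M' : Monad k')
  (V W : Hom k k')
  (ψ : Cell (mt M' ⊙ V) (V ⊙ mt M)) (φ : Cell (mt M' ⊙ W) (W ⊙ mt M))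
  (Hψ : EMw1 M M' ψ) (Hφ : EMw1 M M' φ)
  (Vb : Hom (emJ (EM k M)) (emJ (EM k' M')))
  (πV : Cell (V ⊙ emv (EM k M)) (emv (EM k' M') ⊙ Vb))
  (ιV : Cell (emv (EM k' M') ⊙ Vb) (V ⊙ emv (EM k M)))
  (HV : IsJw (EM k M) (EM k' M') ψ Vb πV ιV)
  (Wb : Hom (emJ (EM k M)) (emJ (EM k' M')))
  (πW : Cell (W ⊙ emv (EM k M)) (emv (EM k' M') ⊙ Wb))
  (ιW : Cell (emv (EM k' M') ⊙ Wb) (W ⊙ emv (EM k M)))
  (HW : IsJw (EM k M) (EM k' M') φ Wb πW ιW)
  (ω : Cell V W) :
  let t := mt M in
  let t' := mt M' in
  let v := emv (EM k M) in
  let v' := emv (EM k' M') in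
  (* π ∗ ω v ∗ ι : v' J^w(V,ψ) ⇒ v' J^w(W,φ) *)
  let ρL := πW ∗ (ω ▷ v) ∗ ιV in
  let algmor := is_alg_mor M' (canon_str (EM k' M') Vb) (canon_str (EM k' M') Wb) ρL in
  (* ω t ∗ ψ ∗ η' V  and  φ ∗ η' W ∗ ω *)
  let ρ1 := (ω ▷ t) ∗ ψ ∗ etaw M' V in
  let ρ2 := φ ∗ etaw M' W ∗ ω in
  (* part (1) *)
  (let c1 := (ω ▷ t) ∗ ψ = Wmu M W ∗ phit φ ∗ (t' ◁ (ω ▷ t)) ∗ (t' ◁ ψ)
                            ∗ (t' ◁ etaw M' V) in
   (c1 <-> EMw2 M M' ψ φ ρ1)
   /\ (c1 <-> (algmor /\ ιW ∗ ρL = (ω ▷ v) ∗ ιV))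
   /\ (c1 <-> exists X : Cell Vb Wb, weak_iota_lifting ιV ιW ω X)
   /\ (c1 ->
       (exists X : Cell Vb Wb, v' ◁ X = Jw2 (EM k M) (EM k' M') πW ιV ρ1)
       /\ forall X : Cell Vb Wb, v' ◁ X = Jw2 (EM k M) (EM k' M') πW ιV ρ1 ->
            v' ◁ X = ρL /\ weak_iota_lifting ιV ιW ω X))
  /\
  (* part (2) *)
  (let c2 := φ ∗ (t' ◁ ω) = Wmu M W ∗ phit φ ∗ etaw M' (W ⊙ t) ∗ (ω ▷ t) ∗ ψ in
   (c2 <-> EMw2 M M' ψ φ ρ2)
   /\ (c2 <-> (algmor /\ ρL ∗ πV = πW ∗ (ω ▷ v)))
   /\ (c2 <-> exists X : Cell Vb Wb, weak_pi_lifting πV πW ω X)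
   /\ (c2 ->
       (exists X : Cell Vb Wb, v' ◁ X = Jw2 (EM k M) (EM k' M') πW ιV ρ2)
       /\ forall X : Cell Vb Wb, v' ◁ X = Jw2 (EM k M) (EM k' M') πW ιV ρ2 ->
            v' ◁ X = ρL /\ weak_pi_lifting πV πW ω X))
  /\
  (* part (3) *)
  (let c3 := φ ∗ (t' ◁ ω) = (ω ▷ t) ∗ ψ in
   (c3 <-> (EMw2 M M' ψ φ ρ2 /\ EMw2 M M' ψ φ ρ1))
   /\ (c3 <-> (algmor /\ ιW ∗ πW ∗ (ω ▷ v) = (ω ▷ v) ∗ ιV ∗ πV))
   /\ (c3 <-> ((exists X : Cell Vb Wb, weak_iota_lifting ιV ιW ω X)
               /\ (exists Y : Cell Vb Wb, weak_pi_lifting πV πW ω Y)))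
   /\ (c3 -> ρ2 = ρ1
             /\ forall X Y : Cell Vb Wb, weak_iota_lifting ιV ιW ω X ->
                  weak_pi_lifting πV πW ω Y -> X = Y)).
Proof.
  cbv zeta.
  set (E := EM k M) in *. set (E' := EM k' M') in *.
  destruct HV as [HipV [HpiV HcV]]. destruct HW as [HipW [HpiW HcW]].
  assert (HipV' : ιV ∗ πV = ew M M' E ψ) by (rewrite HipV; unfold ew, aw; rewrite <- !vassoc; reflexivity).
  assert (HipW' : ιW ∗ πW = ew M M' E φ) by (rewrite HipW; unfold ew, aw; rewrite <- !vassoc; reflexivity).
  assert (HcV' : canon_str E' Vb = πV ∗ aw M M' E ψ ∗ (mt M' ◁ ιV)) by (rewrite HcV; unfold aw; rewrite <- !vassoc; reflexivity).
  assert (HcW' : canon_str E' Wb = πW ∗ aw M M' E φ ∗ (mt M' ◁ ιW)) by (rewrite HcW; unfold aw; rewrite <- !vassoc; reflexivity).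
  clear HipV HipW HcV HcW.
  pose proof (c1_K M M' E ψ φ ω) as Kc1. pose proof (c2_K M M' E ψ φ ω) as Kc2.
  pose proof (c3_K M M' E ψ φ ω) as Kc3.
  pose proof (EMw2_1 M M' E ψ φ Hψ ω) as KE1. pose proof (EMw2_2 M M' E ψ φ Hφ ω) as KE2.
  assert (HJU : forall ρ : Cell V (W ⊙ mt M), Jw2 E E' πW ιV ρ = πW ∗ U M E ρ ∗ ιV)
    by (intro; unfold Jw2, U; rewrite (vassoc (vcounit E W)); reflexivity).
  assert (HJ1 : Jw2 E E' πW ιV ((ω ▷ mt M) ∗ ψ ∗ etaw M' V) = πW ∗ (ω ▷ emv E) ∗ ιV).
  { rewrite HJU, Uρ1. rewrite <- !vassoc, (LeιP _ ιV πV HipV' HpiV). reflexivity. }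
  assert (HJ2 : Jw2 E E' πW ιV (φ ∗ etaw M' W ∗ ω) = πW ∗ (ω ▷ emv E) ∗ ιV).
  { rewrite HJU, Uρ2, !vassoc, (LπeP _ ιW πW HipW' HpiW). reflexivity. }
  pose proof (aw_ew M M' E ψ Hψ) as HaeP. pose proof (aw_ew M M' E φ Hφ) as HaeQ.
  pose proof (ew_aw M M' E ψ Hψ) as HeaP. pose proof (ew_aw M M' E φ Hφ) as HeaQ.
  set (aP := aw M M' E ψ) in *. set (aQ := aw M M' E φ) in *.
  set (eP := ew M M' E ψ) in *. set (eQ := ew M M' E φ) in *.
  set (v := emv E) in *. set (v' := emv E') in *.
  set (wv := ω ▷ v) in *.
  assert (HeP : eP = aP ∗ etaw M' (V ⊙ v)) by reflexivity.
  assert (HeQ : eQ = aQ ∗ etaw M' (W ⊙ v)) by reflexivity.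
  assert (Halg : is_alg_mor M' (canon_str E' Vb) (canon_str E' Wb) (πW ∗ wv ∗ ιV) <->
                 alg M' aP aQ ιV πV ιW πW wv)
    by (unfold is_alg_mor, alg, ρL; rewrite HcV', HcW'; reflexivity).
  pose proof (alg_iff M' aP aQ eP eQ HaeP HaeQ HeaP HeaQ ιV πV ιW πW HipV' HpiV HipW' HpiW wv) as Halg'.
  pose proof (d1_iff eP eQ ιV πV ιW πW HipV' HpiV HipW' wv) as Hd1.
  pose proof (d2_iff eP eQ ιV πV ιW πW HipV' HipW' HpiW wv) as Hd2.
  pose proof (d3_iff eP eQ ιV πV ιW πW HipV' HpiV HipW' HpiW wv) as Hd3.
  pose proof (c1_iff M' aP aQ eP eQ HeP HeQ HeaP wv) as Hc1.
  pose proof (c2_iff M' aP aQ eP eQ HeP HeQ HaeQ wv) as Hc2.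
  pose proof (c3_iff M' aP aQ eP eQ HeP HeQ HaeP HaeQ HeaQ wv) as Hc3.
  unfold ρL in Hd1, Hd2.
  assert (Hiota : (exists X : Cell Vb Wb, weak_iota_lifting ιV ιW ω X) <->
     (is_alg_mor M' (canon_str E' Vb) (canon_str E' Wb) (πW ∗ wv ∗ ιV) /\ ιW ∗ (πW ∗ wv ∗ ιV) = wv ∗ ιV)).
  { unfold weak_iota_lifting. split.
    - intros [X HX]. fold v v' in HX. fold wv in HX.
      assert (HXe : v' ◁ X = πW ∗ wv ∗ ιV) by (rewrite <- HX, vassoc, HpiW, vidl; reflexivity).
      rewrite <- HXe. split; [ exact (@em_mor_func _ _ _ E' _ _ _ X) | exact HX ].
    - intros [HA HB]. destruct (@em_mor _ _ _ E' _ Vb Wb _ HA) as [X [HX _]].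
      exists X. fold v' in HX. rewrite HX. exact HB. }
  assert (Hpi : (exists X : Cell Vb Wb, weak_pi_lifting πV πW ω X) <->
     (is_alg_mor M' (canon_str E' Vb) (canon_str E' Wb) (πW ∗ wv ∗ ιV) /\ (πW ∗ wv ∗ ιV) ∗ πV = πW ∗ wv)).
  { unfold weak_pi_lifting. split.
    - intros [X HX]. fold v v' in HX. fold wv in HX.
      assert (HXe : v' ◁ X = πW ∗ wv ∗ ιV) by (rewrite vassoc, <- HX, <- vassoc, HpiV, vidr; reflexivity).
      rewrite <- HXe. split; [ exact (@em_mor_func _ _ _ E' _ _ _ X) | exact HX ].
    - intros [HA HB]. destruct (@em_mor _ _ _ E' _ Vb Wb _ HA) as [X [HX _]].
      exists X. fold v' in HX. rewrite HX. exact HB. }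
  fold v' in Halg, Hiota, Hpi.
  assert (Hiota_eq : forall X : Cell Vb Wb, weak_iota_lifting ιV ιW ω X -> v' ◁ X = πW ∗ wv ∗ ιV).
  { intros X HX. unfold weak_iota_lifting in HX. fold v v' in HX. fold wv in HX.
    rewrite <- HX, vassoc, HpiW, vidl. reflexivity. }
  assert (Hpi_eq : forall X : Cell Vb Wb, weak_pi_lifting πV πW ω X -> v' ◁ X = πW ∗ wv ∗ ιV).
  { intros X HX. unfold weak_pi_lifting in HX. fold v v' in HX. fold wv in HX.
    rewrite vassoc, <- HX, <- vassoc, HpiV, vidr. reflexivity. }
  split; [ | split ].
  - split; [ | split; [ | split ] ].
    + rewrite Kc1, KE1. reflexivity.
    + rewrite Kc1, Hc1, Halg, Halg', Hd1. reflexivity.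
    + rewrite Hiota, Kc1, Hc1, Halg, Halg', Hd1. reflexivity.
    + rewrite HJ1. intro Hc. rewrite Kc1, Hc1, <- Halg', <- Halg, <- Hd1 in Hc.
      assert (Hi : exists X, weak_iota_lifting ιV ιW ω X) by (apply Hiota; exact Hc).
      destruct Hi as [X0 HX0]. split.
      * exists X0. apply Hiota_eq. exact HX0.
      * intros X HX. split; [exact HX |]. unfold weak_iota_lifting. fold v v'. fold wv.
        rewrite HX. exact (proj2 Hc).
  - split; [ | split; [ | split ] ].
    + rewrite Kc2, KE2. reflexivity.
    + rewrite Kc2, Hc2, Halg, Halg', Hd2. reflexivity.
    + rewrite Hpi, Kc2, Hc2, Halg, Halg', Hd2. reflexivity.
    + rewrite HJ2. intro Hc. rewrite Kc2, Hc2, <- Halg', <- Halg, <- Hd2 in Hc.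
      assert (Hi : exists X, weak_pi_lifting πV πW ω X) by (apply Hpi; exact Hc).
      destruct Hi as [X0 HX0]. split.
      * exists X0. apply Hpi_eq. exact HX0.
      * intros X HX. split; [exact HX |]. unfold weak_pi_lifting. fold v v'. fold wv.
        rewrite HX. exact (proj2 Hc).
  - split; [ | split; [ | split ] ].
    + rewrite Kc3, KE1, KE2, Hc3. tauto.
    + rewrite Kc3, Hc3, Hc1, Hc2, Halg, Halg', Hd3. tauto.
    + rewrite Hiota, Hpi, Kc3, Hc3, Hc1, Hc2, Halg, Halg', Hd1, Hd2. tauto.
    + intro Hc. split; [ apply ρ21; exact Hc |]. intros X Y HX HY.
      rewrite Kc3, Hc3, Hc1, <- Halg', <- Halg in Hc.
      destruct (@em_mor _ _ _ E' _ Vb Wb _ (proj1 (proj1 Hc))) as [Z [_ Hu]].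
      rewrite <- (Hu X (Hiota_eq X HX)), <- (Hu Y (Hpi_eq Y HY)). reflexivity.
Qed.
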